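(* In the setting of the context, suppose primal nondegeneracy $\mathcal N_{X_\star}\cap\mathcal R(\mathcal A^* )=\{0\}$ and dual nondegeneracy $\mathcal N_{S_\star}\cap\mathcal N(\mathcal A)=\{0\}$ hold. Then $\mathrm{Fix}(\mathcal M)=\{0\}$.
   Context: $\mathbb S^n$: real symmetric matrices with trace inner product. SDP pair: min $\langle C,X\rangle$ s.t. $\mathcal AX=b$, $X\succeq0$ / max $b^\top y$ s.t. $\mathcal A^*y+S=C$, $S\succeq0$, $\mathcal AX=(\langle A_i,X\rangle)_i$ surjective, $\mathcal A^*y=\sum y_iA_i$, range $\mathcal R(\mathcal A^* )$, null space $\mathcal N(\mathcal A)$, KKT set nonempty. $\mathcal P=\mathcal A^*(\mathcal A\mathcal A^* )^{-1}\mathcal A$, $\mathcal P^\perp=\mathrm{Id}-\mathcal P$. One-step ADMM with $\sigma>0$: $Z^{(k+1)}=\mathcal P(-2\Pi_{\mathbb S^n_+}(Z^{(k)})+Z^{(k)})+\Pi_{\mathbb S^n_+}(Z^{(k)})+\mathcal A^*(\mathcal A\mathcal A^* )^{-1}b+\sigma\mathcal PC-\sigma C$; assume $Z^{(k)}\to Z_\star=X_\star-\sigma S_\star$, $(X_\star,y_\star,S_\star)$ a KKT point with $\operatorname{rank}X_\star+\operatorname{rank}S_\star=n$. Write $Z_\star=Q_\star\operatorname{diag}(\lambda_1,\dots,\lambda_n)Q_\star^\top$, $Q_\star$ orthogonal, $\lambda_1\ge\dots\ge\lambda_r>0>\lambda_{r+1}\ge\dots\ge\lambda_n$, $r=\operatorname{rank}X_\star$.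 $\mathcal N_{X_\star}=\{Q_\star\begin{pmatrix}0&0\\0&D\end{pmatrix}Q_\star^\top:D\in\mathbb S^{n-r}\}$, $\mathcal N_{S_\star}=\{Q_\star\begin{pmatrix}A&0\\0&0\end{pmatrix}Q_\star^\top:A\in\mathbb S^{r}\}$. $\Theta_{ij}=\lambda_j/(\lambda_j-\lambda_{i+r})$, $\Omega=\begin{pmatrix}E_r&\Theta^\top\\\Theta&0\end{pmatrix}$, $\mathcal D(H)=Q_\star(\Omega\circ(Q_\star^\top HQ_\star))Q_\star^\top$, $\mathcal D^\perp=\mathrm{Id}-\mathcal D$, $\mathcal M=\mathcal P\mathcal D^\perp+\mathcal P^\perp\mathcal D$, $\mathrm{Fix}(\mathcal M)=\{H:\mathcal M(H)=H\}$. *)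

(* Defs.v *)
From HB Require Import structures.
From mathcomp Require Import all_boot all_order all_algebra.
Set Implicit Arguments. Unset Strict Implicit. Unset Printing Implicit Defensive.
Import Order.TTheory GRing.Theory Num.Theory.
Local Open Scope ring_scope.

Section SDP.
Variables (R : realFieldType) (n m : nat).

Definition symmx (X : 'M[R]_n) : Prop := X^T = X.

Definition mxinner (X Y : 'M[R]_n) : R := \tr (X^T *m Y).

Definition psd (X : 'M[R]_n) : Prop :=
  symmx X /\ forall v : 'cV[R]_n, 0 <= (v^T *m X *m v) 0 0.

Definition opA (A : 'I_m -> 'M[R]_n) (X : 'M[R]_n) : 'cV[R]_m :=
  \col_i mxinner (A i) X.
Definition opAadj (A : 'I_m -> 'M[R]_n) (y : 'cV[R]_m) : 'M[R]_n :=
  \sum_i (y i 0 *: A i).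

Definition gramA (A : 'I_m -> 'M[R]_n) : 'M[R]_m :=
  \matrix_(i, j) mxinner (A i) (A j).

Definition projP (A : 'I_m -> 'M[R]_n) (H : 'M[R]_n) : 'M[R]_n :=
  opAadj A (invmx (gramA A) *m opA A H).

(* Omega = [[E_r, Theta^T],[Theta, 0]] written out entrywise, where
   Theta_{ij} = lam_j / (lam_j - lam_{i+r}) (0-indexed blocks). *)
Definition Omega (lam : 'rV[R]_n) (r : nat) : 'M[R]_n :=
  \matrix_(a, b)
    if (a < r)%N && (b < r)%N then 1
    else if (a < r)%N then lam 0 a / (lam 0 a - lam 0 b)
    else if (b < r)%N then lam 0 b / (lam 0 b - lam 0 a)
    else 0.

Definition hadamard (U V : 'M[R]_n) : 'M[R]_n := \matrix_(i, j) (U i j * V i j).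

Definition opD (Q : 'M[R]_n) (lam : 'rV[R]_n) (r : nat) (H : 'M[R]_n) : 'M[R]_n :=
  Q *m hadamard (Omega lam r) (Q^T *m H *m Q) *m Q^T.

(* calM = calP calD^perp + calP^perp calD *)
Definition opM (A : 'I_m -> 'M[R]_n) (Q : 'M[R]_n) (lam : 'rV[R]_n) (r : nat)
    (H : 'M[R]_n) : 'M[R]_n :=
  projP A (H - opD Q lam r H) + (opD Q lam r H - projP A (opD Q lam r H)).

Definition FixM (A : 'I_m -> 'M[R]_n) (Q : 'M[R]_n) (lam : 'rV[R]_n) (r : nat)
    (H : 'M[R]_n) : Prop :=
  symmx H /\ opM A Q lam r H = H.

Definition inNX (Q : 'M[R]_n) (r : nat) (H : 'M[R]_n) : Prop :=
  exists W : 'M[R]_n, symmx W /\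
    (forall a b : 'I_n, (a < r)%N || (b < r)%N -> W a b = 0) /\
    H = Q *m W *m Q^T.

Definition inNS (Q : 'M[R]_n) (r : nat) (H : 'M[R]_n) : Prop :=
  exists W : 'M[R]_n, symmx W /\
    (forall a b : 'I_n, (r <= a)%N || (r <= b)%N -> W a b = 0) /\
    H = Q *m W *m Q^T.

Definition inRangeAadj (A : 'I_m -> 'M[R]_n) (H : 'M[R]_n) : Prop :=
  exists y : 'cV[R]_m, H = opAadj A y.

Definition inNullA (A : 'I_m -> 'M[R]_n) (H : 'M[R]_n) : Prop :=
  symmx H /\ opA A H = 0.

Definition is_psd_proj (Z P : 'M[R]_n) : Prop :=
  psd P /\ forall Y, psd Y -> mxinner (Z - P) (Z - P) <= mxinner (Z - Y) (Z - Y).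

End SDP.

(* Main.v *)
Require Import Defs.
From HB Require Import structures.
From mathcomp Require Import all_boot all_order all_algebra.
Import Order.TTheory GRing.Theory Num.Theory.
Local Open Scope ring_scope.

Lemma mul_self_ge0 {R : realFieldType} (x : R) : 0 <= x * x.
Proof. by rewrite -expr2 sqr_ge0. Qed.

Lemma mxinnerC (R : realFieldType) (n : nat) (X Y : 'M[R]_n) :
  mxinner X Y = mxinner Y X.
Proof. by rewrite /mxinner -mxtrace_tr trmx_mul trmxK. Qed.

Lemma mxinnerE (R : realFieldType) (n : nat) (X Y : 'M[R]_n) :
  mxinner X Y = \sum_i \sum_j X i j * Y i j.
Proof.
rewrite /mxinner /mxtrace exchange_big /=; apply: eq_bigr => i _.
by rewrite !mxE; apply: eq_bigr => j _; rewrite !mxE.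
Qed.

Lemma mxinner_eq0 (R : realFieldType) (n : nat) (X : 'M[R]_n) :
  mxinner X X = 0 -> X = 0.
Proof.
rewrite mxinnerE => h; apply/matrixP => i j; rewrite mxE.
have h1 := psumr_eq0P (fun i _ => sumr_ge0 _ (fun j _ => mul_self_ge0 (X i j))) h.
have h2 := h1 i isT.
have h3 := psumr_eq0P (fun j _ => mul_self_ge0 (X i j)) h2 (i:=j) isT.
by move/eqP: h3; rewrite mulf_eq0 orbb => /eqP.
Qed.

Lemma mxinnerDr (R : realFieldType) (n : nat) (X Y Z : 'M[R]_n) :
  mxinner X (Y + Z) = mxinner X Y + mxinner X Z.
Proof. by rewrite /mxinner mulmxDr mxtraceD. Qed.

Lemma mxinnerBr (R : realFieldType) (n : nat) (X Y Z : 'M[R]_n) :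
  mxinner X (Y - Z) = mxinner X Y - mxinner X Z.
Proof. by rewrite /mxinner mulmxBr raddfB. Qed.

Lemma mxinnerZr (R : realFieldType) (n : nat) (X Y : 'M[R]_n) a :
  mxinner X (a *: Y) = a * mxinner X Y.
Proof. by rewrite /mxinner -scalemxAr mxtraceZ. Qed.

Lemma mxinner_sumr (R : realFieldType) (n k : nat) (X : 'M[R]_n) (F : 'I_k -> 'M[R]_n) :
  mxinner X (\sum_i F i) = \sum_i mxinner X (F i).
Proof. by rewrite /mxinner mulmx_sumr raddf_sum. Qed.

Lemma mxinner_adjr (R : realFieldType) (n m : nat) (A : 'I_m -> 'M[R]_n) X y :
  mxinner X (opAadj A y) = \sum_i y i 0 * mxinner X (A i).
Proof. by rewrite /opAadj mxinner_sumr; apply: eq_bigr => i _; rewrite mxinnerZr. Qed.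

Lemma mxinner_adjl (R : realFieldType) (n m : nat) (A : 'I_m -> 'M[R]_n) X y :
  mxinner (opAadj A y) X = \sum_i y i 0 * mxinner (A i) X.
Proof. by rewrite mxinnerC mxinner_adjr; apply: eq_bigr => i _; rewrite mxinnerC. Qed.

Lemma opA_adj (R : realFieldType) (n m : nat) (A : 'I_m -> 'M[R]_n) z :
  opA A (opAadj A z) = gramA A *m z.
Proof.
apply/matrixP => i j; rewrite !mxE (ord1 j) mxinner_adjr.
by apply: eq_bigr => k _; rewrite !mxE mulrC.
Qed.

Lemma opAB (R : realFieldType) (n m : nat) (A : 'I_m -> 'M[R]_n) X Y :
  opA A (X - Y) = opA A X - opA A Y.
Proof. by apply/matrixP => i j; rewrite !mxE mxinnerBr. Qed.

Lemma opAadjB (R : realFieldType) (n m : nat) (A : 'I_m -> 'M[R]_n) y z :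
  opAadj A (y - z) = opAadj A y - opAadj A z.
Proof.
rewrite /opAadj -sumrB; apply: eq_bigr => i _; by rewrite !mxE scalerBl.
Qed.

Lemma projPB (R : realFieldType) (n m : nat) (A : 'I_m -> 'M[R]_n) X Y :
  projP A (X - Y) = projP A X - projP A Y.
Proof. by rewrite /projP opAB mulmxBr opAadjB. Qed.

Lemma gram_unit (R : realFieldType) (n m : nat) (A : 'I_m -> 'M[R]_n) :
  (forall c : 'cV[R]_m, exists X, symmx X /\ opA A X = c) ->
  gramA A \in unitmx.
Proof.
move=> surj.
have key : forall u : 'rV[R]_m, u *m gramA A = 0 -> u = 0.
  move=> u hu.
  set Y := opAadj A u^T.
  have hYA : forall j, mxinner Y (A j) = 0.
    move=> j; rewrite mxinner_adjl.
    transitivity ((u *m gramA A) 0 j); last by rewrite hu mxE.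
    by rewrite mxE; apply: eq_bigr => k _; rewrite !mxE.

  have hY : Y = 0.
    apply: mxinner_eq0; rewrite {2}/Y mxinner_adjr big1 // => k _.
    by rewrite hYA mulr0.
  have [X [_ hX]] := surj u^T.
  have : mxinner Y X = 0 by rewrite hY /mxinner trmx0 mul0mx mxtrace0.
  rewrite mxinner_adjl => h0.
  have h1 : \sum_i u 0 i * u 0 i = 0.
    rewrite -[RHS]h0; apply: eq_bigr => i _.
    by have := congr1 (fun M : 'cV[R]_m => M i 0) hX; rewrite !mxE => ->.
  apply/rowP => i; rewrite mxE.
  have := psumr_eq0P (fun i _ => mul_self_ge0 (u 0 i)) h1 (i:=i) isT.
  by move/eqP; rewrite mulf_eq0 orbb => /eqP.
rewrite -row_free_unit -kermx_eq0; apply/eqP/row_matrixP => i.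
rewrite row0; apply: key.
by rewrite -row_mul mulmx_ker row0.
Qed.

Lemma opA_projP (R : realFieldType) (n m : nat) (A : 'I_m -> 'M[R]_n) X :
  gramA A \in unitmx -> opA A (projP A X) = opA A X.
Proof. by move=> hu; rewrite /projP opA_adj mulmxA mulmxV // mul1mx. Qed.

From mathcomp Require Import ring lra.

Lemma conj_inner (R : realFieldType) (n : nat) (Q U V : 'M[R]_n) :
  Q^T *m Q = 1%:M -> mxinner (Q *m U *m Q^T) (Q *m V *m Q^T) = mxinner U V.
Proof.
move=> hQ; rewrite /mxinner !trmx_mul !trmxK.
rewrite !mulmxA -[Q *m U^T *m Q^T *m Q]mulmxA hQ mulmx1.
by rewrite -!mulmxA mxtrace_mulC !mulmxA -[U^T *m V *m Q^T *m Q]mulmxA hQ mulmx1.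
Qed.

Lemma Omega_sym (R : realFieldType) (n : nat) (lam : 'rV[R]_n) r a b :
  Omega lam r a b = Omega lam r b a.
Proof. by rewrite !mxE; case: (a < r)%N; case: (b < r)%N. Qed.

Lemma Omega_bnd (R : realFieldType) (n : nat) (lam : 'rV[R]_n) r :
  (forall i : 'I_n, (i < r)%N -> 0 < lam 0 i) ->
  (forall i : 'I_n, (r <= i)%N -> lam 0 i < 0) ->
  forall a b, [/\ 0 <= Omega lam r a b, Omega lam r a b <= 1 &
     ((a < r)%N != (b < r)%N -> 0 < Omega lam r a b < 1)].
Proof.
move=> hp hn a b.
have mix : forall x y : 'I_n, (x < r)%N -> ~~ (y < r)%N ->
    0 < lam 0 x / (lam 0 x - lam 0 y) < 1.
  move=> x y hx hy.
  have h1 := hp x hx; have h2 : lam 0 y < 0 by apply: hn; rewrite leqNgt.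
  have hd : 0 < lam 0 x - lam 0 y by lra.
  by rewrite divr_gt0 //= ltr_pdivrMr // mul1r; lra.
rewrite mxE; case ha: (a < r)%N; case hb: (b < r)%N => /=.
- by rewrite ler01 lexx.
- by have /andP[l1 l2] := mix a b ha (negbT hb); rewrite (ltW l1) (ltW l2) l1 l2.
- by have /andP[l1 l2] := mix b a hb (negbT ha); rewrite (ltW l1) (ltW l2) l1 l2.
- by rewrite lexx ler01.
Qed.
Theorem lemma3 (R : realFieldType) (n m : nat)
    (A : 'I_m -> 'M[R]_n) (b : 'cV[R]_m) (C : 'M[R]_n) (sigma : R)
    (Xs : 'M[R]_n) (ys : 'cV[R]_m) (Ss : 'M[R]_n)
    (Q : 'M[R]_n) (lam : 'rV[R]_n) (r : nat)
    (Zk PiZk : nat -> 'M[R]_n) :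
  (* data: A_i, C in S^n, calA surjective onto R^m *)
  (forall i, symmx (A i)) -> symmx C ->
  (forall c : 'cV[R]_m, exists X, symmx X /\ opA A X = c) ->
  0 < sigma ->
  (* (Xs, ys, Ss) is a KKT point *)
  psd Xs -> opA A Xs = b -> psd Ss -> opAadj A ys + Ss = C -> mxinner Xs Ss = 0 ->
  (* strict complementarity *)
  (\rank Xs + \rank Ss)%N = n ->
  (* one-step ADMM iterates converging to Z* = Xs - sigma Ss *)
  (forall k, symmx (Zk k)) ->
  (forall k, is_psd_proj (Zk k) (PiZk k)) ->
  (forall k, Zk k.+1 = projP A (- (2%:R *: PiZk k) + Zk k) + PiZk k
                       + opAadj A (invmx (gramA A) *m b)
                       + sigma *: projP A C - sigma *: C) ->
  (forall eps : R, 0 < eps -> exists N : nat, forall k, (N <= k)%N ->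
      forall i j, `|Zk k i j - (Xs - sigma *: Ss) i j| < eps) ->
  (* eigendecomposition of Z* *)
  Q^T *m Q = 1%:M ->
  Xs - sigma *: Ss = Q *m diag_mx lam *m Q^T ->
  (forall i j : 'I_n, (i <= j)%N -> lam 0 j <= lam 0 i) ->
  r = \rank Xs ->
  (forall i : 'I_n, (i < r)%N -> 0 < lam 0 i) ->
  (forall i : 'I_n, (r <= i)%N -> lam 0 i < 0) ->
  (* primal nondegeneracy: N_{X*} ∩ R(A^adj) = {0} *)
  (forall H, inNX Q r H -> inRangeAadj A H -> H = 0) ->
  (* dual nondegeneracy: N_{S*} ∩ N(A) = {0} *)
  (forall H, inNS Q r H -> inNullA A H -> H = 0) ->
  (* conclusion: Fix(M) = {0} *)
  forall H, FixM A Q lam r H -> H = 0.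
Proof.
move=> _ _ surj _ _ _ _ _ _ _ _ _ _ _ hQ _ _ _ hpos hneg ndX ndS H [symH hfix].
clear b C sigma Xs ys Ss Zk PiZk.
have gu := @gram_unit _ _ _ A surj.
rewrite /opM in hfix.
set K := opD Q lam r H in hfix *.
have eHK : H - K = projP A (H - K - K).
  rewrite projPB -{1}hfix.
  by rewrite addrCA addrAC subrr add0r.
have hAK : opA A K = 0.
  have := congr1 (opA A) eHK; rewrite opA_projP // !opAB.
  rewrite -{1}[opA A H - opA A K]addr0 => /addrI /eqP.
  by rewrite eq_sym oppr_eq0 => /eqP.
have hinner : mxinner (H - K) K = 0.
  rewrite eHK /projP mxinner_adjl big1 // => i _.
  have := congr1 (fun M : 'cV[R]_m => M i 0) hAK; rewrite !mxE => ->.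
  by rewrite mulr0.
have hQ' : Q *m Q^T = 1%:M := mulmx1C hQ.
set G := Q^T *m H *m Q.
set W1 := hadamard (Omega lam r) G.
set W2 := G - W1.
have eH : H = Q *m G *m Q^T.
  by rewrite /G !mulmxA hQ' mul1mx -mulmxA hQ' mulmx1.
have eK : K = Q *m W1 *m Q^T by [].
have eHK2 : H - K = Q *m W2 *m Q^T.
  by rewrite {1}eH eK -mulmxBl -mulmxBr.
have hW : mxinner W2 W1 = 0 by rewrite -(conj_inner _ _ _ _ _ hQ) -eHK2 -eK.
have symG : G^T = G by rewrite /G !trmx_mul trmxK symH mulmxA.
have hB := @Omega_bnd _ _ lam r hpos hneg.
have Gmix : forall a b : 'I_n, (a < r)%N != (b < r)%N -> G a b = 0.
  move=> a b hab.
  have term : forall a b, W2 a b * W1 a b =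
      (Omega lam r a b * (1 - Omega lam r a b)) * (G a b * G a b).
    by move=> x y; rewrite !mxE; ring.
  have tge0 : forall a b, 0 <= W2 a b * W1 a b.
    move=> x y; rewrite term; have [h0 h1 _] := hB x y.
    by apply: mulr_ge0; [apply: mulr_ge0; lra | apply: mul_self_ge0].
  move: hW; rewrite mxinnerE => hW.
  have h1 := psumr_eq0P (fun i _ => sumr_ge0 _ (fun j _ => tge0 i j)) hW (i:=a) isT.
  have := psumr_eq0P (fun j _ => tge0 a j) h1 (i:=b) isT.
  have [_ _ /(_ hab) /andP[l1 l2]] := hB a b.
  rewrite term => /eqP; rewrite mulf_eq0 => /orP[/eqP e|]; first by exfalso; move: e; apply/eqP; rewrite gt_eqF // mulr_gt0 // subr_gt0.
  by rewrite mulf_eq0 orbb => /eqP.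
have W1E : forall a b : 'I_n, W1 a b = if (a < r)%N && (b < r)%N then G a b else 0.
  move=> a b; rewrite /W1 mxE [Omega lam r a b]mxE.
  case ha: (a < r)%N; case hb: (b < r)%N => /=; rewrite ?mul1r ?mul0r //.
    by rewrite Gmix ?mulr0 // ha hb.
  by rewrite Gmix ?mulr0 // ha hb.
have symW1 : symmx W1.
  apply/matrixP => a b; rewrite mxE !W1E andbC.
  by case: ifP => // _; rewrite -{1}symG mxE.
have symW2 : symmx W2 by rewrite /symmx /W2 linearB /= symG symW1.
have hK0 : K = 0.
  apply: ndS.
    exists W1; split; first exact: symW1.
    split; last exact: eK.
    move=> a b h; rewrite W1E ifF //; apply/negbTE.
    by rewrite negb_and -!leqNgt.
  split; last exact: hAK.
  by rewrite /symmx eK !trmx_mul trmxK symW1 mulmxA.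
have hHK0 : H - K = 0.
  apply: ndX.
    exists W2; split; first exact: symW2.
    split; last exact: eHK2.
    move=> a b hab; rewrite /W2 [(G - W1) a b]mxE [(- W1) a b]mxE W1E.
    case ha: (a < r)%N; case hb: (b < r)%N => /=; rewrite ?subrr //.
      by rewrite Gmix ?subr0 // ha hb.
    by rewrite Gmix ?subr0 // ha hb.
    by move: hab; rewrite ha hb.
  by rewrite eHK /projP; eexists.
by rewrite -(subrK K H) hHK0 hK0 addr0.
Qed.
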